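(* Let $\Gamma=(V,E)$ be a strongly connected digraph with diameter $D\ge 2$. Let $X=\{x_1,\ldots,x_r\}\subset V$ with $r\ge 2$ be such that all vertices of $X$ have the same set of in-neighbors, say $Y=\Gamma^-(x_i)$ for $i=1,\ldots,r$, and let $Z=\Gamma^+(X)$. Let $\Gamma'$ be a digraph obtained from $\Gamma$ by replacing the set of arcs $e(X,Z)$ by another set of arcs $e'(X,Z)$ (all other arcs unchanged) such that: (i) $e'(Y,X)\cap e'(X,Z)=e(Y,X)\cap e(X,Z)$, where $e'(Y,X)$ denotes the set of arcs from $Y$ to $X$ in $\Gamma'$; (ii) considering the arcs that are not loops, every vertex of $X$ has some out-going arc in $\Gamma'$ to a vertex of $Z$, and every vertex of $Z$ has some in-going arc in $\Gamma'$ from a vertex of $X$. Assume moreover that every vertex of $Z$ has the same number of in-going arcs in $\Gamma'$ as in $\Gamma$, i.e. $|\Gamma'^-(v)|=|\Gamma^-(v)|$ for every $v\in Z$. Then $\Gamma$ and $\Gamma'$ are cospectral, i.e. their adjacency matrices have the same characteristic polynomial.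
   Context: For a vertex $v$, $\Gamma^-(v)$, $\Gamma'^-(v)$ denote the sets of in-neighbors of $v$ in $\Gamma$, $\Gamma'$ respectively, and $\Gamma^+(v)$ the out-neighbors; $\Gamma^+(U)$ is the set of vertices adjacent from some vertex of $U$. For $X,Y\subset V$, $e(X,Y)$ denotes the set of arcs from $X$ to $Y$ in $\Gamma$ ($e'(X,Y)$ in $\Gamma'$). A loop is an arc from a vertex to itself. The adjacency matrix $A=(a_{uv})$ has $a_{uv}=1$ if $(u,v)$ is an arc and $0$ otherwise. *)

(* Defs.v *)
From mathcomp Require Import all_boot all_order all_algebra.
Set Implicit Arguments. Unset Strict Implicit. Unset Printing Implicit Defensive.
Import GRing.Theory.

(* A digraph on vertex set 'I_n is an arc relation E : rel 'I_n
   (E u v = true iff (u,v) is an arc; loops allowed). *)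
Section Digraph.
Variable n : nat.
Implicit Types (E : rel 'I_n) (A B : {set 'I_n}).

Fixpoint within E (k : nat) (u v : 'I_n) : bool :=
  (u == v) || (if k is k'.+1 then [exists w, E u w && within E k' w v] else false).

Definition strongly_connected E := forall u v : 'I_n, connect E u v.

(* distance: least k with a walk of length <= k (walks of length < n suffice
   in a strongly connected digraph). *)
Definition dist E (u v : 'I_n) : nat := find (fun k => within E k u v) (iota 0 n).

Definition diameter E : nat := \max_(u < n) \max_(v < n) dist E u v.

Definition in_nbrs E (v : 'I_n) : {set 'I_n} := [set u | E u v].
Definition out_nbrs_set E A : {set 'I_n} := [set z | [exists x in A, E x z]].

Definition arcs E A B : {set 'I_n * 'I_n} :=
  [set a | (a.1 \in A) && (a.2 \in B) && E a.1 a.2].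

Definition adj E : 'M[int]_n := \matrix_(u < n, v < n) ((E u v)%:R)%R.
End Digraph.

(* Main.v *)
Require Import Defs.
From mathcomp Require Import all_boot all_order all_algebra all_fingroup.
Set Implicit Arguments. Unset Strict Implicit. Unset Printing Implicit Defensive.
Import GRing.Theory.
Local Open Scope ring_scope.

Lemma cp_eq n (B B' : 'M[int]_n) (S : {set 'I_n}) :
  (forall i s, s \in S -> B i s = 0) ->
  (forall i s, s \in S -> B' i s = 0) ->
  (forall i k, i \notin S -> B i k = B' i k) ->
  char_poly B = char_poly B'.
Proof.
move=> h1 h2 h3; rewrite /char_poly /determinant; apply: eq_bigr => s _.
congr (_ * _).
have [fix_s|] := boolP [forall x in S, s x == x].
  apply: eq_bigr => i _; rewrite !mxE.
  case: (boolP (i \in S)) => iS.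
    by move/forall_inP: fix_s => /(_ i iS)/eqP ->; rewrite h1 // h2.
  by rewrite h3.
rewrite negb_forall_in => /exists_inP [x xS sx].
set j := (s^-1)%g x.
have sj : s j = x by rewrite /j permKV.
have jx : j != x.
  by apply: contraNneq sx => e; rewrite -{2}sj e.
rewrite (bigD1 j) //= [in RHS](bigD1 j) //= !mxE sj (negbTE jx) h1 // h2 //.
by rewrite !subrr !mul0r.
Qed.
Lemma cp_conj n (L R M : 'M[int]_n) : L *m R = 1%:M ->
  char_poly (L *m M *m R) = char_poly M.
Proof.
move=> LR; rewrite /char_poly /char_poly_mx !map_mxM.
set Lp := map_mx _ L; set Rp := map_mx _ R.
have LRp : Lp *m Rp = 1%:M by rewrite -map_mxM LR map_mx1.
have XE : ('X%:M : 'M[{poly int}]_n) = Lp *m 'X%:M *m Rp.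
  by rewrite mul_mx_scalar -scalemxAl LRp scalemx1.
rewrite {1}XE -mulmxBl -mulmxBr !det_mulmx mulrAC -det_mulmx LRp det1.
by rewrite mul1r.
Qed.
Section P.
Variables (n : nat) (x1 : 'I_n) (S : {set 'I_n}).
Definition Pm : 'M[int]_n := \matrix_(i, j) ((i == x1) && (j \in S))%:R.

Lemma PM (M : 'M[int]_n) i k :
  (Pm *m M) i k = (i == x1)%:R * \sum_(j in S) M j k.
Proof.
rewrite !mxE big_distrr /= [RHS]big_mkcond; apply: eq_bigr => j _.
rewrite mxE; case: (i == x1); case: (j \in S) => /=; by rewrite ?mul1r ?mul0r.
Qed.

Lemma MP (M : 'M[int]_n) i k :
  (M *m Pm) i k = (k \in S)%:R * M i x1.
Proof.
rewrite !mxE (bigD1 x1) //= big1 ?addr0.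
  by rewrite mxE eqxx /= mulrC.
by move=> j /negbTE jx; rewrite mxE jx /= mulr0.
Qed.

Hypothesis x1S : x1 \notin S.

Lemma PP : Pm *m Pm = 0.
Proof.
apply/matrixP => i k; rewrite MP !mxE (negbTE x1S) andbF.
by rewrite mulr0.
Qed.

Lemma LR : (1%:M + Pm) *m (1%:M - Pm) = 1%:M.
Proof.
by rewrite mulmxDl mul1mx mulmxBr mulmx1 PP subr0 addrNK.
Qed.

Lemma Bentry (M : 'M[int]_n) i k :
  ((1%:M + Pm) *m M *m (1%:M - Pm)) i k =
  M i k + (i == x1)%:R * \sum_(j in S) M j k
  - (k \in S)%:R * (M i x1 + (i == x1)%:R * \sum_(j in S) M j x1).
Proof.
have hD (A B : 'M[int]_n) a b : (A + B) a b = A a b + B a b by rewrite mxE.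
have hN (A : 'M[int]_n) a b : (- A) a b = - A a b by rewrite mxE.
rewrite mulmxDl mul1mx mulmxBr mulmx1 mulmxDl hD hN hD hD PM MP MP PM.
by rewrite mulrDr.
Qed.
End P.

Lemma key n (A A' : 'M[int]_n) (X : {set 'I_n}) x1 :
 x1 \in X ->
 (forall u x, x \in X -> A u x = A u x1) ->
 (forall u x, x \in X -> A' u x = A u x) ->
 (forall u v, u \notin X -> A' u v = A u v) ->
 (forall v, \sum_(x in X) A x v = \sum_(x in X) A' x v) ->
 char_poly A = char_poly A'.
Proof.
move=> x1X hA hA'A hrow hsum.
set S := X :\ x1.
have x1S : x1 \notin S by rewrite !inE eqxx.
have hA' u x : x \in X -> A' u x = A' u x1.
  by move=> xX; rewrite !hA'A // hA.
have SX s : s \in S -> s \in X by rewrite !inE => /andP[].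
rewrite -(cp_conj A (LR x1S)) -(cp_conj A' (LR x1S)).
apply: (@cp_eq _ _ _ S).
- move=> i s sS; rewrite Bentry sS /= mul1r hA ?SX //.
  rewrite (eq_bigr (fun j => A j x1)) ?subrr // => j jS; exact: hA (SX _ sS).
- move=> i s sS; rewrite Bentry sS /= mul1r hA' ?SX //.
  rewrite (eq_bigr (fun j => A' j x1)) ?subrr // => j jS; exact: hA' (SX _ sS).
move=> i k iS; rewrite !Bentry.
have [->|ix1] := eqVneq i x1.
  rewrite !mul1r /S -(big_setD1 x1 (F := fun j => A j k) x1X) -(big_setD1 x1 (F := fun j => A j x1) x1X).
  rewrite -(big_setD1 x1 (F := fun j => A' j k) x1X) -(big_setD1 x1 (F := fun j => A' j x1) x1X).
  by rewrite !hsum.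
have iX : i \notin X by rewrite !inE ix1 /= in iS.
by rewrite !mul0r !addr0 !hrow.
Qed.

Lemma sum_card n (X B : {set 'I_n}) :
  \sum_(x in X) (((x \in B) : nat)%:R : int) = #|B :&: X|%:R.
Proof.
rewrite -sum1_card natr_sum [LHS]big_mkcond [RHS]big_mkcond /=.
apply: eq_bigr => x _.
by rewrite !inE andbC; case: (x \in X); case: (x \in B).
Qed.

Local Close Scope ring_scope.

Theorem mainTheorem4 (n : nat) (E E' : rel 'I_n) (X Y : {set 'I_n}) :
  strongly_connected E ->
  2 <= diameter E ->
  2 <= #|X| ->
  (forall x, x \in X -> in_nbrs E x = Y) ->
  let Z := out_nbrs_set E X in
  (* all arcs outside e(X,Z) are unchanged *)
  (forall u v, ~~ ((u \in X) && (v \in Z)) -> E' u v = E u v) ->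
  (* (i) *)
  arcs E' Y X :&: arcs E' X Z = arcs E Y X :&: arcs E X Z ->
  (* (ii) *)
  (forall x, x \in X -> exists2 z, z \in Z & (z != x) && E' x z) ->
  (forall z, z \in Z -> exists2 x, x \in X & (x != z) && E' x z) ->
  (forall v, v \in Z -> #|in_nbrs E' v| = #|in_nbrs E v|) ->
  char_poly (adj E) = char_poly (adj E').
Proof.
move=> _ _ cX hin Z hE' hi _ _ hcard; clearbody Z.
have [x1 x1X] : exists x1, x1 \in X.
  by apply/set0Pn; rewrite -card_gt0; apply: leq_trans cX.
have hY u x : x \in X -> E u x = (u \in Y).
  by move=> xX; rewrite -(hin x xX) inE.
have hrow u v : u \notin X -> E' u v = E u v.
  by move=> uX; apply: hE'; rewrite (negbTE uX).
have hYX x w : x \in X -> (w \in Y) || (w \notin X) -> E' w x = E w x.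
  move=> xX /orP[wY|wX]; last exact: hrow.
  case wX: (w \in X); last by rewrite hrow ?wX.
  case xZ: (x \in Z); last by apply: hE'; rewrite xZ andbF.
  move/setP: hi => /(_ (w, x)); rewrite /= !inE /= wY wX xX xZ /=.
  by rewrite !andbb.
have hcol u x : x \in X -> E' u x = E u x.
  move=> xX; case xZ: (x \in Z); last by apply: hE'; rewrite xZ andbF.
  have sub : in_nbrs E x \subset in_nbrs E' x.
    apply/subsetP => w; rewrite !inE => Ewx; rewrite hYX //.
    by rewrite -(hY w x xX) Ewx.
  have /(subset_cardP (esym (hcard x xZ))) eqs := sub.
  by have := eqs u; rewrite !inE.
apply: (@key n (adj E) (adj E') X x1 x1X).
- by move=> u x xX; rewrite !mxE !hY.
- by move=> u x xX; rewrite !mxE hcol.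
- by move=> u v uX; rewrite !mxE hrow.
move=> v; case vZ: (v \in Z); last first.
  by apply: eq_bigr => x xX; rewrite !mxE hE' // vZ andbF.
have e1 B : (\sum_(x in X) adj B x v = \sum_(x in X) (((x \in in_nbrs B v) : nat)%:R : int))%R.
  by apply: eq_bigr => x _; rewrite !mxE inE.
rewrite !e1 !sum_card; congr (_%:R)%R.
have eD : in_nbrs E' v :\: X = in_nbrs E v :\: X.
  by apply/setP => w; rewrite !inE; case wX: (w \in X) => //=; rewrite hrow ?wX.
apply/eqP; rewrite -(eqn_add2r #|in_nbrs E v :\: X|) -{2}eD !cardsID.
by rewrite hcard.
Qed.
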